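(* $w^\ast(3,3)\ge 414$. More precisely, the 3-coloring of $\{1,\dots,413\}$ in which the color of $n$ is the $n$-th letter of the following word (the concatenation of the six lines, of lengths $70,70,70,70,70,63$) contains no monochromatic double 3-term arithmetic progression: 0101102210100201200100221221010010220010112011211202210112122112202210 0110010220201122022002202001012212112122001001120121100110020022002110 2001101001121120210020011210201121122112122010110100110102201220201221 1210021122112122112200110011212200202202001212212112212200110010110012 0211212200220100112202200220200122102212211211002101220022001001100221 211010010110020022110010110010221211020220200220221001122011211
   Context: An increasing sequence of positive integers $a_1<a_2<\cdots$ (finite or infinite) contains a double 3-term arithmetic progression if there are indices $i<j<k$ with $i+k=2j$ and $a_i+a_k=2a_j$. For a coloring of an interval, each color class is regarded as an increasing sequence by listing its elements in increasing order; a monochromatic double 3-term arithmetic progression is a double 3-term arithmetic progression in some color class. $w^\ast(r,3)$ denotes the least integer $N$, if it exists, such that every $r$-coloring of $\{1,\dots,N\}$ has a monochromatic double 3-term arithmetic progression; $w^\ast(3,3)\ge414$ means that either it does not exist or it is at least $414$. *)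

(* Defs.v *)
From mathcomp Require Import all_boot.
Set Implicit Arguments. Unset Strict Implicit. Unset Printing Implicit Defensive.

(* An increasing sequence s = (a_1 < a_2 < ...), indexed from 0 here, contains a
   double 3-term AP if there are indices i < j < k with i + k = 2j and
   a_i + a_k = 2 a_j. *)
Definition has_double3AP (s : seq nat) : Prop :=
  exists i j k : nat,
    [/\ i < j, j < k, k < size s, i + k = 2 * j &
        nth 0 s i + nth 0 s k = 2 * nth 0 s j].

Definition color_class (r N : nat) (c : nat -> 'I_r) (col : 'I_r) : seq nat :=
  [seq n <- iota 1 N | c n == col].

(* The coloring c of {1,...,N} has a monochromatic double 3-term AP.
   (Values of c outside {1,...,N} are irrelevant.) *)
Definition mono_double3AP (r N : nat) (c : nat -> 'I_r) : Prop :=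
  exists col : 'I_r, has_double3AP (color_class N c col).

Definition word413 : seq nat := [:: 0; 1; 0; 1; 1; 0; 2; 2; 1; 0; 1; 0; 0; 2; 0; 1; 2; 0; 0; 1; 0; 0; 2; 2; 1; 2; 2; 1; 0; 1; 0; 0; 1; 0; 2; 2; 0; 0; 1; 0; 1; 1; 2; 0; 1; 1; 2; 1; 1; 2; 0; 2; 2; 1; 0; 1; 1; 2; 1; 2; 2; 1; 1; 2; 2; 0; 2; 2; 1; 0; 0; 1; 1; 0; 0; 1; 0; 2; 2; 0; 2; 0; 1; 1; 2; 2; 0; 2; 2; 0; 0; 2; 2; 0; 2; 0; 0; 1; 0; 1; 2; 2; 1; 2; 1; 1; 2; 1; 2; 2; 0; 0; 1; 0; 0; 1; 1; 2; 0; 1; 2; 1; 1; 0; 0; 1; 1; 0; 0; 2; 0; 0; 2; 2; 0; 0; 2; 1; 1; 0; 2; 0; 0; 1; 1; 0; 1; 0; 0; 1; 1; 2; 1; 1; 2; 0; 2; 1; 0; 0; 2; 0; 0; 1; 1; 2; 1; 0; 2; 0; 1; 1; 2; 1; 1; 2; 2; 1; 1; 2; 1; 2; 2; 0; 1; 0; 1; 1; 0; 1; 0; 0; 1; 1; 0; 1; 0; 2; 2; 0; 1; 2; 2; 0; 2; 0; 1; 2; 2; 1; 1; 2; 1; 0; 0; 2; 1; 1; 2; 2; 1; 1; 2; 1; 2; 2; 1; 1; 2; 2; 0; 0; 1; 1; 0; 0; 1; 1; 2; 1; 2; 2; 0; 0; 2; 0; 2; 2; 0; 2; 0; 0; 1;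 2; 1; 2; 2; 1; 2; 1; 1; 2; 2; 1; 2; 2; 0; 0; 1; 1; 0; 0; 1; 0; 1; 1; 0; 0; 1; 2; 0; 2; 1; 1; 2; 1; 2; 2; 0; 0; 2; 2; 0; 1; 0; 0; 1; 1; 2; 2; 0; 2; 2; 0; 0; 2; 2; 0; 2; 0; 0; 1; 2; 2; 1; 0; 2; 2; 1; 2; 2; 1; 1; 2; 1; 1; 0; 0; 2; 1; 0; 1; 2; 2; 0; 0; 2; 2; 0; 0; 1; 0; 0; 1; 1; 0; 0; 2; 2; 1; 2; 1; 1; 0; 1; 0; 0; 1; 0; 1; 1; 0; 0; 2; 0; 0; 2; 2; 1; 1; 0; 0; 1; 0; 1; 1; 0; 0; 1; 0; 2; 2; 1; 2; 1; 1; 0; 2; 0; 2; 2; 0; 2; 0; 0; 2; 2; 0; 2; 2; 1; 0; 0; 1; 1; 2; 2; 0; 1; 1; 2; 1; 1].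

Definition c413 (n : nat) : 'I_3 := inord (nth 0 word413 n.-1).

(* Main.v *)
Require Import Defs.
From mathcomp Require Import all_boot.
From mathcomp Require Import zify.

Definition okb (s : seq nat) : bool :=
  all (fun i => all (fun d => (i + 2 * d.+1 < size s) ==>
        (nth 0 s i + nth 0 s (i + 2 * d.+1) != 2 * nth 0 s (i + d.+1)))
      (iota 0 (size s))) (iota 0 (size s)).

Lemma okb_correct s : okb s -> ~ has_double3AP s.
Proof.
move=> /allP H [i [j [k [Hij Hjk Hk Hs Heq]]]].
have Hi : i \in iota 0 (size s) by rewrite mem_iota; lia.
have /allP H2 := H i Hi.
have Hd : (j - i).-1 \in iota 0 (size s) by rewrite mem_iota; lia.
have := H2 _ Hd.
have E1 : i + 2 * ((j - i).-1).+1 = k by lia.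
have E2 : i + ((j - i).-1).+1 = j by lia.
rewrite E1 E2 Hk /= Heq.
by rewrite eqxx.
Qed.

Lemma dAP_cat s1 s2 : has_double3AP s1 -> has_double3AP (s1 ++ s2).
Proof.
move=> [i [j [k [Hij Hjk Hk Hs Heq]]]].
exists i, j, k; split => //.
- by rewrite size_cat; lia.
- rewrite !nth_cat.
  have -> : i < size s1 by lia.
  have -> : j < size s1 by lia.
  by rewrite Hk.
Qed.

Lemma class_prefix N col : N <= 413 ->
  exists s2, color_class 413 c413 col = color_class N c413 col ++ s2.
Proof.
move=> HN.
have -> : 413 = N + (413 - N) by lia.
rewrite /color_class iotaD filter_cat.
by eexists.
Qed.

Definition cls (col : nat) := [seq n <- iota 1 413 | nth 0 word413 n.-1 == col].

Lemma all_ok : all (fun col => okb (cls col)) (iota 0 3).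
Proof. by vm_compute. Qed.

Lemma word_lt3 : all (fun d => d < 3) word413.
Proof. by vm_compute. Qed.

Lemma cls_eq col : color_class 413 c413 col = cls (val col).
Proof.
rewrite /color_class /cls; apply: eq_in_filter => n.
rewrite mem_iota => Hn.
have Hlt : nth 0 word413 n.-1 < 3.
  have /allP A := word_lt3; apply: A; apply: mem_nth.
  have -> : size word413 = 413 by vm_compute.
  lia.
by rewrite -val_eqE /c413 /= inordK.
Qed.

Lemma no_mono : ~ mono_double3AP 413 c413.
Proof.
move=> [col H].
have /allP A := all_ok.
have : val col \in iota 0 3 by rewrite mem_iota leq0n add0n ltn_ord.
move/A/okb_correct; apply.
by rewrite -cls_eq.
Qed.

Theorem theorem2 :
  size word413 = 413 /\ all (fun d => d < 3) word413 /\
  ~ mono_double3AP 413 c413 /\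
  (forall N : nat, (forall c : nat -> 'I_3, mono_double3AP N c) -> 414 <= N).
Proof.
split; first by vm_compute.
split; first by vm_compute.
split; first exact: no_mono.
move=> N H; case: (leqP 414 N) => // HN.
have [col Hc] := H c413.
have [s2 E] := @class_prefix N col HN.
exfalso; apply: no_mono; exists col; rewrite E; exact: dAP_cat.
Qed.
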